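(* Let $p$ be a prime, identify $V=\mathbb{F}_p^d$ with $\mathbb{F}_{p^d}$, let $\omega$ be a primitive element of $\mathbb{F}_{p^d}$, let $\hat\omega$ be the map $x\mapsto x\omega$ and $\varphi$ the map $x\mapsto x^p$, so $\Gamma L_1(p^d)=\langle\hat\omega,\varphi\rangle$. Suppose $H\le\Gamma L_1(p^d)$ is $p$-exceptional on $V$. Then $p$ divides $d$, and there is a factorisation $d=p^ks$ with $k\ge1$ and an integer $j$ dividing $p^s-1$ such that $K=\langle\hat\omega^{(p^s-1)/j},\varphi^s\rangle$ is a normal subgroup of $H$ of index coprime to $p$. Conversely, for any such $d=p^ks$ ($k\ge1$) and $j\mid p^s-1$, the group $K=\langle\hat\omega^{(p^s-1)/j},\varphi^s\rangle$ is $p$-exceptional and $\frac12$-transitive on $V^\sharp$, having $(p^s-1)/j$ orbits on $V^\sharp$, each of length $j(p^d-1)/(p^s-1)$; any subgroup of $\Gamma L_1(p^d)$ containing such a $K$ with index coprime to $p$ and meeting $\langle\hat\omega\rangle$ in $K\cap\langle\hat\omega\rangle$ is $p$-exceptional; and each such $K$ contains the $p$-exceptional group $\langle\hat\omega^{p^{d/p}-1},\varphi^{d/p}\rangle$.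
   Context: $G$ is $p$-exceptional on $V$ if $p$ divides $|G|$ and every orbit of $G$ on $V$ has size coprime to $p$. $V^\sharp$ is the set of nonzero vectors. $G$ is $\frac12$-transitive if all its orbits on $V^\sharp$ have equal size. *)

(* Defs.v *)
From HB Require Import structures.
From mathcomp Require Import all_boot all_order all_algebra all_fingroup all_solvable all_field.
Set Implicit Arguments. Unset Strict Implicit. Unset Printing Implicit Defensive.
Import GRing.Theory.

(* The permutation induced by f if f is injective (the identity otherwise;
   only used for injective f below). *)
Definition perm_of (T : finType) (f : T -> T) : {perm T} :=
  match injectiveP f with
  | ReflectT inj => perm inj
  | ReflectF _ => 1%g
  end.

Lemma perm_ofE (T : finType) (f : T -> T) : injective f -> forall x, perm_of f x = f x.
Proof.
move=> inj x; rewrite /perm_of; case: injectiveP => [i|/(_ inj)//].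
by rewrite permE.
Qed.

Definition omhat (F : finFieldType) (w : F) : {perm F} :=
  perm_of (fun x : F => (x * w)%R).

Definition frobp (F : finFieldType) (p : nat) : {perm F} :=
  perm_of (fun x : F => (x ^+ p)%R).

Definition GammaL1 (F : finFieldType) (p : nat) (w : F) : {set {perm F}} :=
  <<[set omhat w; frobp F p]>>%g.

Definition Kgrp (F : finFieldType) (p : nat) (w : F) (s j : nat) : {set {perm F}} :=
  <<[set (omhat w ^+ ((p ^ s - 1) %/ j))%g; (frobp F p ^+ s)%g]>>%g.

Definition p_exceptional (F : finFieldType) (p : nat) (G : {set {perm F}}) : Prop :=
  p %| #|G| /\ forall x : F, coprime #|orbit 'P G x| p.

Definition Vsharp (F : finFieldType) : {set F} := [set x : F | x != 0%R].

Definition half_transitive (F : finFieldType) (G : {set {perm F}}) : Prop :=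
  forall x y : F, x \in Vsharp F -> y \in Vsharp F ->
    #|orbit 'P G x| = #|orbit 'P G y|.

Definition orbits_sharp (F : finFieldType) (G : {set {perm F}}) : {set {set F}} :=
  orbit 'P G @: Vsharp F.

(* Main.v *)
Require Import Defs.
From HB Require Import structures.
From mathcomp Require Import all_boot all_order all_algebra all_fingroup all_solvable all_field.
From mathcomp Require Import zify.
Set Implicit Arguments. Unset Strict Implicit. Unset Printing Implicit Defensive.
Import GRing.Theory.
Local Open Scope group_scope.

Lemma omhatE (F : finFieldType) (w : F) x : w != 0%R -> omhat w x = (x * w)%R.
Proof. by move=> w0; rewrite /omhat perm_ofE //; apply: mulIf. Qed.

Lemma omhatXE (F : finFieldType) (w : F) i x : w != 0%R -> (omhat w ^+ i) x = (x * w ^+ i)%R.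
Proof.
move=> w0; elim: i x => [|i IH] x; first by rewrite expg0 perm1 expr0 mulr1.
by rewrite expgSr permM IH omhatE // exprSr mulrA.
Qed.

Lemma frobpE (F : finFieldType) p x : p \in [pchar F]%R -> frobp F p x = (x ^+ p)%R.
Proof.
move=> hc; rewrite /frobp perm_ofE //.
exact: (fmorph_inj (pFrobenius_aut hc)).
Qed.

Lemma frobpXE (F : finFieldType) p i x : p \in [pchar F]%R -> (frobp F p ^+ i) x = (x ^+ (p ^ i))%R.
Proof.
move=> hc; elim: i x => [|i IH] x; first by rewrite expg0 perm1 expr1.
by rewrite expgSr permM IH frobpE // expnSr exprM.
Qed.


Lemma basics (F : finFieldType) (p d : nat) (w : F)
  (hp : prime p) (hF : #|F| = (p ^ d)%N) (hw : ((p ^ d).-1.-primitive_root w)%R) :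
  [/\ p \in [pchar F]%R, w != 0%R, 0 < (p ^ d).-1, 0 < d &
     forall x : F, x != 0%R -> exists i, x = (w ^+ i)%R].
Proof.
have hc := card_finPcharP hF hp.
have N0 := prim_order_gt0 hw.
have d0 : 0 < d.
  rewrite lt0n; apply/negP => /eqP d0; move: hF; rewrite d0 expn0 => h1.
  by have := finNzRing_gt1 F; rewrite h1.
split=> //; first by rewrite (prim_root_eq0 hw) -lt0n.
move=> x x0; have : (x ^+ (p ^ d).-1 = 1)%R.
  apply: (mulIf x0); rewrite mul1r -exprSr prednK ?expn_gt0 ?prime_gt0 //.
  by rewrite -hF expf_card.
by case/(prim_rootP hw) => i ->; exists i.
Qed.

Lemma omhatX1 (F : finFieldType) (p d : nat) (w : F)
  (hp : prime p) (hF : #|F| = (p ^ d)%N) (hw : ((p ^ d).-1.-primitive_root w)%R) n :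
  (omhat w ^+ n == 1) = ((p ^ d).-1 %| n).
Proof.
have [_ w0 _ _ _] := basics hp hF hw.
rewrite (prim_order_dvd hw); apply/eqP/eqP => [h|h].
  by have := congr1 (fun g : {perm F} => g 1%R) h; rewrite omhatXE // perm1 mul1r.
by apply/permP => x; rewrite omhatXE // h mulr1 perm1.
Qed.

Lemma order_omhat (F : finFieldType) (p d : nat) (w : F)
  (hp : prime p) (hF : #|F| = (p ^ d)%N) (hw : ((p ^ d).-1.-primitive_root w)%R) :
  #[omhat w] = (p ^ d).-1.
Proof.
apply/eqP; rewrite eqn_dvd; apply/andP; split.
  by rewrite order_dvdn (omhatX1 hp hF hw).
by rewrite -(omhatX1 hp hF hw) -order_dvdn.
Qed.

Lemma order_frobp (F : finFieldType) (p d : nat) (w : F)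
  (hp : prime p) (hF : #|F| = (p ^ d)%N) (hw : ((p ^ d).-1.-primitive_root w)%R) :
  #[frobp F p] = d.
Proof.
have [hc w0 N0 d0 _] := basics hp hF hw.
have hd : frobp F p ^+ d = 1.
  by apply/permP => x; rewrite frobpXE // -hF expf_card perm1.
have e_dvd : #[frobp F p] %| d by rewrite order_dvdn hd.
apply/eqP; rewrite eqn_dvd e_dvd /=.
set e := #[frobp F p] in e_dvd *.
have e0 : 0 < e by apply: order_gt0.
have he : frobp F p ^+ e = 1 by apply: expg_order.
have := congr1 (fun g : {perm F} => g w) he; rewrite frobpXE // perm1 => hwe.
have : (w ^+ (p ^ e) == w ^+ 1)%R by rewrite hwe expr1.
rewrite (eq_prim_root_expr hw) eqn_mod_dvd ?expn_gt0 ?prime_gt0 //.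
move/dvdn_leq => h.
have h1 : 1 < p ^ e by rewrite -{1}(expn0 p) ltn_exp2l ?prime_gt1.
have := h ltac:(by rewrite subn_gt0).
rewrite -subn1 leq_sub2rE ?expn_gt0 ?prime_gt0 // leq_exp2l ?prime_gt1 // => hde.
have hed := dvdn_leq d0 e_dvd.
by have -> : d = e by apply/eqP; rewrite eqn_leq hde hed.
Qed.

Lemma conj_omhat (F : finFieldType) (p d : nat) (w : F)
  (hp : prime p) (hF : #|F| = (p ^ d)%N) (hw : ((p ^ d).-1.-primitive_root w)%R) :
  omhat w ^ frobp F p = omhat w ^+ p.
Proof.
have [hc w0 N0 d0 _] := basics hp hF hw.
apply/permP => z; rewrite /conjg !permM omhatXE // omhatE // frobpE //.
by rewrite exprMn -frobpE // permKV.
Qed.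

Lemma frob_norm (F : finFieldType) (p d : nat) (w : F)
  (hp : prime p) (hF : #|F| = (p ^ d)%N) (hw : ((p ^ d).-1.-primitive_root w)%R) :
  <[frobp F p]> \subset 'N(<[omhat w]>).
Proof. by rewrite norms_cycle (conj_omhat hp hF hw) mem_cycle. Qed.

Lemma Gamma_join (F : finFieldType) (p : nat) (w : F) :
  GammaL1 p w = <[omhat w]> <*> <[frobp F p]>.
Proof. by rewrite /GammaL1 joing_idl joing_idr. Qed.

Lemma Gamma_norm (F : finFieldType) (p d : nat) (w : F)
  (hp : prime p) (hF : #|F| = (p ^ d)%N) (hw : ((p ^ d).-1.-primitive_root w)%R) :
  GammaL1 p w \subset 'N(<[omhat w]>).
Proof.
by rewrite Gamma_join join_subG normG (frob_norm hp hF hw).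
Qed.

Lemma Gamma_mul (F : finFieldType) (p d : nat) (w : F)
  (hp : prime p) (hF : #|F| = (p ^ d)%N) (hw : ((p ^ d).-1.-primitive_root w)%R) :
  GammaL1 p w = <[omhat w]> * <[frobp F p]>.
Proof. by rewrite Gamma_join norm_joinEr // (frob_norm hp hF hw). Qed.

Lemma Gamma_fix0 (F : finFieldType) (p d : nat) (w : F)
  (hp : prime p) (hF : #|F| = (p ^ d)%N) (hw : ((p ^ d).-1.-primitive_root w)%R) g :
  g \in GammaL1 p w -> g 0%R = 0%R.
Proof.
have [hc w0 N0 d0 _] := basics hp hF hw.
rewrite (Gamma_mul hp hF hw) => /mulsgP[a f /cycleP[i ->] /cycleP[t ->] ->].
by rewrite permM omhatXE // mul0r frobpXE // expr0n expn_eq0 eqn0Ngt prime_gt0.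
Qed.

Lemma Gamma_stab1 (F : finFieldType) (p d : nat) (w : F)
  (hp : prime p) (hF : #|F| = (p ^ d)%N) (hw : ((p ^ d).-1.-primitive_root w)%R) :
  'C_(GammaL1 p w)[1%R | 'P] \subset <[frobp F p]>.
Proof.
have [hc w0 N0 d0 _] := basics hp hF hw.
apply/subsetP => g; rewrite inE => /andP[]; rewrite (Gamma_mul hp hF hw).
move=> /mulsgP[a f /cycleP[i ->] /cycleP[t ->] ->].
rewrite !inE /= sub1set inE apermE permM omhatXE // mul1r frobpXE // => /eqP h.
have hi : (w ^+ i = 1)%R.
  have := congr1 (fun x => (frobp F p ^+ t) x) (erefl (w ^+ i)%R).
  move=> _; apply: (@perm_inj _ (frobp F p ^+ t)).
  by rewrite frobpXE // h frobpXE // expr1n.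
have : omhat w ^+ i == 1 by rewrite (omhatX1 hp hF hw) (prim_order_dvd hw) hi.
by move/eqP->; rewrite mul1g mem_cycle.
Qed.

Lemma Gamma_comm (F : finFieldType) (p d : nat) (w : F)
  (hp : prime p) (hF : #|F| = (p ^ d)%N) (hw : ((p ^ d).-1.-primitive_root w)%R) g h :
  g \in GammaL1 p w -> h \in GammaL1 p w -> [~ g, h] \in <[omhat w]>.
Proof.
move=> hg hh.
have : (GammaL1 p w)^`(1) \subset <[omhat w]>.
  apply: der1_min; first exact: (Gamma_norm hp hF hw).
  change (abelian (GammaL1 p w / <[omhat w]>)).
  rewrite Gamma_join quotientYidl ?(frob_norm hp hF hw) //.
  by apply: cyclic_abelian; apply: quotient_cyclic; apply: cycle_cyclic.
by move/subsetP; apply; apply: mem_commg.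
Qed.

Lemma dvd_pow_sub1 n t : 0 < n -> (n - 1) %| (n ^ t - 1).
Proof.
move=> n0; rewrite -eqn_mod_dvd ?expn_gt0 ?n0 //.
have h : n = 1 %[mod n - 1] by rewrite -{1}(subnK n0) modnDl.
by rewrite -modnXm h modnXm exp1n.
Qed.

Lemma dvd_expsub1 p a b : 0 < p -> a %| b -> (p ^ a - 1) %| (p ^ b - 1).
Proof. by move=> p0 /dvdnP[t ->]; rewrite mulnC expnM dvd_pow_sub1 ?expn_gt0 ?p0. Qed.

Lemma conv_arith (p d k s j : nat) : prime p -> 0 < d ->
  d = (p ^ k * s)%N -> 0 < k -> j %| p ^ s - 1 ->
  [/\ 0 < s, 0 < (p ^ s - 1) %/ j, ((p ^ s - 1) %/ j * j = p ^ s - 1)%N,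
      (p ^ s - 1) %/ j %| (p ^ d).-1 & s %| d].
Proof.
move=> hp d0 hd k0 hj.
have s0 : 0 < s by move: d0; rewrite hd muln_gt0 => /andP[].
have p1 : 1 < p ^ s by rewrite -{1}(expn0 p) ltn_exp2l ?prime_gt1.
have ps0 : 0 < p ^ s - 1 by rewrite subn_gt0.
have j0 : 0 < j by move: hj; case: j => //; rewrite dvd0n => /eqP h; rewrite h in ps0.
have hm : ((p ^ s - 1) %/ j * j = p ^ s - 1)%N by rewrite divnK.
have sd : s %| d by rewrite hd dvdn_mull.
split=> //.
  by rewrite divn_gt0 // dvdn_leq.
apply: dvdn_trans (dvdn_mulr j (dvdnn _)) _; rewrite hm -subn1.
by apply: dvd_expsub1 => //; apply: prime_gt0.
Qed.

Lemma C_norm (F : finFieldType) (p d : nat) (w : F)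
  (hp : prime p) (hF : #|F| = (p ^ d)%N) (hw : ((p ^ d).-1.-primitive_root w)%R) m :
  GammaL1 p w \subset 'N(<[omhat w ^+ m]>).
Proof.
rewrite Gamma_join join_subG; apply/andP; split.
  apply: subset_trans (cent_sub _); rewrite centsC.
  by apply: (subset_trans _ (cycle_abelian (omhat w))); rewrite cycle_subG mem_cycle.
by rewrite norms_cycle conjXg (conj_omhat hp hF hw) expgnAC mem_cycle.
Qed.

Lemma semireg (F : finFieldType) (p d : nat) (w : F)
  (hp : prime p) (hF : #|F| = (p ^ d)%N) (hw : ((p ^ d).-1.-primitive_root w)%R) g x :
  g \in <[omhat w]> -> x != 0%R -> g x = x -> g = 1.
Proof.
have [hc w0 N0 d0 _] := basics hp hF hw.
case/cycleP => i -> x0; rewrite omhatXE // => h.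
have : (w ^+ i = 1)%R by apply: (mulfI x0); rewrite h mulr1.
by move/eqP; rewrite -(prim_order_dvd hw) -(omhatX1 hp hF hw) => /eqP.
Qed.

Lemma conv_main (F : finFieldType) (p d : nat) (w : F)
  (hp : prime p) (hF : #|F| = (p ^ d)%N) (hw : ((p ^ d).-1.-primitive_root w)%R)
  k s j (hd : d = (p ^ k * s)%N) (hk : 0 < k) (hj : j %| p ^ s - 1)
  (L : {group {perm F}}) (x : F) :
  L \subset GammaL1 p w -> Kgrp p w s j \subset L -> x != 0%R ->
  let Q := ('C_L[x | 'P] <*> <[omhat w ^+ ((p ^ s - 1) %/ j)]>)%G in
  [/\ Kgrp p w s j \subset Q, Q \subset L &
     #|orbit 'P L x| = (#|L : Q| * ((p ^ d).-1 %/ ((p ^ s - 1) %/ j)))%N].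
Proof.
have [hc w0 N0 d0 hx] := basics hp hF hw.
have [s0 m0 hm mN sd] := conv_arith hp d0 hd hk hj.
set m := (p ^ s - 1) %/ j in m0 hm mN *.
move=> sLG sKL x0 Q.
set C := <[omhat w ^+ m]>.
have CK : C \subset Kgrp p w s j by rewrite cycle_subG mem_gen // !inE eqxx.
have fK : frobp F p ^+ s \in Kgrp p w s j by rewrite mem_gen // !inE eqxx orbT.
have sLxL : 'C_L[x | 'P] \subset L by apply: subsetIl.
have nC : 'C_L[x | 'P] \subset 'N(C).
  exact: subset_trans sLxL (subset_trans sLG (C_norm hp hF hw m)).
have QE : Q :=: 'C_L[x | 'P] * C by rewrite /= norm_joinEl.
have sQL : Q \subset L by rewrite /= join_subG sLxL (subset_trans CK sKL).
have sKQ : Kgrp p w s j \subset Q.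
  rewrite gen_subG; apply/subsetP => g; rewrite !inE => /orP[]/eqP->.
    by rewrite mem_gen // inE cycle_id orbT.
  have [e xe] := hx x x0.
  pose c := (omhat w ^+ m) ^+ (e * j).
  have cC : c \in C by rewrite mem_cycle.
  have hcx : c x = (frobp F p ^+ s) x.
    rewrite /c -expgM omhatXE // frobpXE // xe -!exprM -exprD; congr (w ^+ _)%R.
    have : 1 <= p ^ s by rewrite expn_gt0 prime_gt0.
    move=> P1; rewrite mulnCA hm mulnBr muln1 subnKC //.
    by rewrite leq_pmulr.
  have gLx : frobp F p ^+ s * c^-1 \in 'C_L[x | 'P].
    have cL : c \in L := subsetP sKL _ (subsetP CK _ cC).
    have fL : frobp F p ^+ s \in L := subsetP sKL _ fK.
    rewrite inE groupM ?groupV //=.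
    by apply/astab1P; rewrite /= apermE permM -hcx permK.
  have h : frobp F p ^+ s \in 'C_L[x | 'P] * C.
    by rewrite -(mulgKV c (frobp F p ^+ s)); apply: mem_mulg.
  by rewrite QE.
split=> //.
have ti : 'C_L[x | 'P] :&: C = 1.
  apply/trivgP/subsetP => g /setIP[/setIP[_ /astab1P /= hg] gC].
  by rewrite inE; apply/eqP; apply: (semireg hp hF hw _ x0) => //;
    apply: subsetP gC; rewrite cycle_subG mem_cycle.
have oC : #|C| = ((p ^ d).-1 %/ m)%N.
  by rewrite -(order_omhat hp hF hw) /C -orderE orderXdiv // (order_omhat hp hF hw).
have iQ : #|Q : 'C_L[x | 'P]| = #|C|.
  have := mul_cardG 'C_L[x | 'P] C; rewrite ti cards1 muln1 -QE.
  rewrite -(Lagrange (joing_subl _ _ : 'C_L[x | 'P] \subset Q)) => /eqP.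
  by rewrite eqn_pmul2l ?cardG_gt0 // => /eqP.
by rewrite card_orbit -(Lagrange_index sQL (joing_subl _ C)) iQ oC.
Qed.

Lemma coprimeN (p d : nat) : prime p -> 0 < d -> coprime (p ^ d).-1 p.
Proof.
move=> hp d0; have := coprimenS (p ^ d).-1.
rewrite prednK ?expn_gt0 ?prime_gt0 // => h.
by apply: coprime_dvdr h; rewrite -(prednK d0) expnS dvdn_mulr.
Qed.

Lemma conv_exc (F : finFieldType) (p d : nat) (w : F)
  (hp : prime p) (hF : #|F| = (p ^ d)%N) (hw : ((p ^ d).-1.-primitive_root w)%R)
  k s j (hd : d = (p ^ k * s)%N) (hk : 0 < k) (hj : j %| p ^ s - 1)
  (L : {group {perm F}}) :
  L \subset GammaL1 p w -> Kgrp p w s j \subset L ->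
  coprime #|L : Kgrp p w s j| p -> p_exceptional p L.
Proof.
have [hc w0 N0 d0 hx] := basics hp hF hw.
have [s0 m0 hm mN sd] := conv_arith hp d0 hd hk hj.
move=> sLG sKL cop; split.
  have fK : frobp F p ^+ s \in Kgrp p w s j by rewrite mem_gen // !inE eqxx orbT.
  have o : #[frobp F p ^+ s] = (p ^ k)%N.
    by rewrite orderXdiv (order_frobp hp hF hw) // hd mulnK.
  apply: dvdn_trans (cardSg sKL); apply: dvdn_trans (order_dvdG fK).
  by rewrite o -(prednK hk) expnS dvdn_mulr.
move=> x; have [->|x0] := eqVneq x 0%R.
  rewrite card_orbit.
  have -> : 'C_L[0%R | 'P] = L.
    apply/setIidPl/subsetP => g gL; apply/astab1P => /=.
    by rewrite apermE (Gamma_fix0 hp hF hw) // (subsetP sLG).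
  by rewrite indexgg coprime1n.
have [sKQ sQL ->] := conv_main hp hF hw hd hk hj sLG sKL x0.
rewrite coprimeMl; apply/andP; split.
  apply: coprime_dvdl cop.
  by rewrite -(Lagrange_index sQL sKQ) dvdn_mulr.
apply: coprime_dvdl (coprimeN hp d0).
by rewrite -{2}(divnK mN) dvdn_mulr.
Qed.

Definition KG (F : finFieldType) (p : nat) (w : F) (s j : nat) :=
  <<[set (omhat w ^+ ((p ^ s - 1) %/ j))%g; (frobp F p ^+ s)%g]>>%G.

Lemma KGE (F : finFieldType) (p : nat) (w : F) (s j : nat) :
  Kgrp p w s j = KG p w s j.
Proof. by []. Qed.

Lemma K_sub (F : finFieldType) (p : nat) (w : F) (s j : nat) :
  Kgrp p w s j \subset GammaL1 p w.
Proof.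
rewrite gen_subG; apply/subsetP => g; rewrite !inE => /orP[]/eqP->.
  by rewrite groupX // mem_gen // !inE eqxx.
by rewrite groupX // mem_gen // !inE eqxx orbT.
Qed.

Lemma K_orbit (F : finFieldType) (p d : nat) (w : F)
  (hp : prime p) (hF : #|F| = (p ^ d)%N) (hw : ((p ^ d).-1.-primitive_root w)%R)
  k s j (hd : d = (p ^ k * s)%N) (hk : 0 < k) (hj : j %| p ^ s - 1) x :
  x != 0%R -> #|orbit 'P (Kgrp p w s j) x| = ((p ^ d).-1 %/ ((p ^ s - 1) %/ j))%N.
Proof.
move=> x0; rewrite KGE.
have [sKQ sQL ->] := conv_main hp hF hw hd hk hj (K_sub p w s j) (subxx _) x0.
move: sKQ; rewrite -indexg_eq1 => /eqP ->; exact: mul1n.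
Qed.

Lemma Gamma_acts (F : finFieldType) (p d : nat) (w : F)
  (hp : prime p) (hF : #|F| = (p ^ d)%N) (hw : ((p ^ d).-1.-primitive_root w)%R)
  (L : {group {perm F}}) :
  L \subset GammaL1 p w -> [acts L, on Vsharp F | 'P].
Proof.
move=> sLG; apply/actsP => g gL x; rewrite !inE /= apermE.
have g0 := Gamma_fix0 hp hF hw (subsetP sLG _ gL).
by rewrite -{1}g0 (inj_eq perm_inj).
Qed.

Lemma K_count (F : finFieldType) (p d : nat) (w : F)
  (hp : prime p) (hF : #|F| = (p ^ d)%N) (hw : ((p ^ d).-1.-primitive_root w)%R)
  k s j (hd : d = (p ^ k * s)%N) (hk : 0 < k) (hj : j %| p ^ s - 1) :
  #|orbits_sharp (Kgrp p w s j)| = ((p ^ s - 1) %/ j)%N.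
Proof.
have [hc w0 N0 d0 hx] := basics hp hF hw.
have [s0 m0 hm mN sd] := conv_arith hp d0 hd hk hj.
set m := (p ^ s - 1) %/ j in m0 hm mN *.
have hpart := orbit_partition (Gamma_acts hp hF hw (K_sub p w s j)).
have := card_partition hpart.
have cV : #|Vsharp F| = (p ^ d).-1.
  by rewrite -hF -(cardsC1 0%R); apply: eq_card => x; rewrite !inE.
rewrite cV (eq_bigr (fun _ => ((p ^ d).-1 %/ m)%N)); last first.
  move=> A /imsetP[x]; rewrite inE => x0 ->.
  exact: (K_orbit hp hF hw hd hk hj x0).
rewrite sum_nat_const /orbits_sharp => h.
have c0 : 0 < (p ^ d).-1 %/ m by rewrite divn_gt0 // dvdn_leq.
apply/eqP; rewrite -(eqn_pmul2r c0) -h.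
by rewrite mulnC divnK.
Qed.

Lemma normal_over (F : finFieldType) (p d : nat) (w : F)
  (hp : prime p) (hF : #|F| = (p ^ d)%N) (hw : ((p ^ d).-1.-primitive_root w)%R)
  (H X : {group {perm F}}) :
  H \subset GammaL1 p w -> X \subset H -> H :&: <[omhat w]> \subset X -> H \subset 'N(X).
Proof.
move=> sHG sXH sCX; rewrite -commg_subr gen_subG.
apply/subsetP => z /imset2P[h x hH xX ->].
have xH := subsetP sXH _ xX.
apply: (subsetP sCX); rewrite inE groupR //=.
by apply: (Gamma_comm hp hF hw); apply: (subsetP sHG).
Qed.

Lemma forward (F : finFieldType) (p d : nat) (w : F)
  (hp : prime p) (hF : #|F| = (p ^ d)%N) (hw : ((p ^ d).-1.-primitive_root w)%R)
  (H : {group {perm F}}) :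
  H \subset GammaL1 p w -> p_exceptional p H ->
     p %| d /\
     exists k s j : nat,
       [/\ d = (p ^ k * s)%N, 0 < k, j %| p ^ s - 1,
           (Kgrp p w s j <| H)%g & coprime #|H : Kgrp p w s j|%g p].
Proof.
have [hc w0 N0 d0 hx] := basics hp hF hw.
move=> sHG [pH hcop].
set k := logn p #|H|.
have k0 : 0 < k by rewrite logn_gt0 mem_primes hp cardG_gt0.
have [P sylP] := Sylow_exists p 'C_H[1%R | 'P].
have iH1 : coprime #|H : 'C_H[1%R | 'P]| p by rewrite -card_orbit.
have oP : #|P| = (p ^ k)%N.
  rewrite (card_Hall sylP) p_part /k.
  rewrite -(Lagrange (subsetIl H 'C[1%R | 'P])) lognM ?cardG_gt0 ?indexg_gt0 //.
  by rewrite (logn_coprime (_ : coprime p #|H : 'C_H[1%R | 'P]|)) ?addn0 // coprime_sym.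
have sPH1 : P \subset 'C_H[1%R | 'P] := pHall_sub sylP.
have sP : P \subset <[frobp F p]>.
  apply: subset_trans (Gamma_stab1 hp hF hw).
  by apply: subset_trans sPH1 _; apply: setSI.
have pkd : (p ^ k)%N %| d.
  by rewrite -oP -(order_frobp hp hF hw); apply: cardSg.
set s := d %/ p ^ k.
have hd : d = (p ^ k * s)%N by rewrite /s mulnC divnK.
have PE : P :=: <[frobp F p ^+ s]>.
  have pko : (p ^ k)%N %| #[frobp F p] by rewrite (order_frobp hp hF hw).
  have := cycle_sub_group pko.
  rewrite (order_frobp hp hF hw) -/s => /setP/(_ P); rewrite !inE sP oP eqxx /=.
  by move=> h; have /eqP -> : P == <[frobp F p ^+ s]>%G by rewrite -h.
have fH : frobp F p ^+ s \in H.
  by apply: (subsetP (subsetIl H 'C[1%R | 'P])); apply: (subsetP sPH1); rewrite PE cycle_id.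
set N := (p ^ d).-1.
set C := (H :&: <[omhat w]>)%G.
have oA : #|<[omhat w]>| = N by rewrite -orderE (order_omhat hp hF hw).
have CN : #|C| %| N by rewrite -oA cardSg ?subsetIr.
set m := N %/ #|C|.
have mN : m %| N by rewrite /m -{2}(divnK CN) dvdn_mulr.
have m0 : 0 < m by rewrite divn_gt0 ?cardG_gt0 // dvdn_leq.
have CE : C :=: <[omhat w ^+ m]>.
  have CN' : #|C| %| #[omhat w] by rewrite (order_omhat hp hF hw).
  have := cycle_sub_group CN'.
  rewrite (order_omhat hp hF hw) -/N -/m => /setP/(_ C); rewrite !inE subsetIr eqxx /=.
  move=> h; have /eqP hC : C == <[omhat w ^+ m]>%G by rewrite -h.
  exact: (congr1 (@gval _) hC).
have sCH : C \subset H by apply: subsetIl.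
set Hw := 'C_H[w | 'P].
set Q := (Hw <*> C)%G.
have sHwH : Hw \subset H by apply: subsetIl.
have nCH : H \subset 'N(C) by apply: (normal_over hp hF hw) => //.
have QE : Q :=: Hw * C by rewrite /= norm_joinEl // (subset_trans sHwH nCH).
have sQH : Q \subset H by rewrite /= join_subG sHwH.
have nQH : H \subset 'N(Q).
  by apply: (normal_over hp hF hw) => //; rewrite /= joing_subr.
have iQ : coprime #|H : Q| p.
  have := hcop w; rewrite card_orbit -(Lagrange_index sQH (joing_subl Hw C)).
  by rewrite coprimeMl => /andP[].
have fQ : frobp F p ^+ s \in Q.
  have fN := subsetP nQH _ fH.
  apply: coset_idr => //; apply/eqP; rewrite -order_eq1.
  have h1 : #[coset Q (frobp F p ^+ s)] %| (p ^ k)%N.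
    by rewrite -oP PE orderE; apply: morph_order.
  have h2 : #[coset Q (frobp F p ^+ s)] %| #|H : Q|.
    by rewrite -card_quotient //; apply: order_dvdG; apply: mem_quotient.
  have cop : coprime (p ^ k) #|H : Q| by rewrite coprimeXl // coprime_sym.
  have := coprime_dvdr h2 (coprime_dvdl h1 cop).
  by rewrite /coprime gcdnn.
have ms : m %| p ^ s - 1.
  move: fQ; rewrite QE => /mulsgP[h c hHw]; rewrite CE => /cycleP[i ->] hf.
  have := congr1 (fun g : {perm F} => g w) hf.
  have hww : h w = w.
    by have /astab1P := subsetP (subsetIr _ _) _ hHw; rewrite /= apermE.
  rewrite permM hww -expgM omhatXE //.
  rewrite frobpXE // -exprS => /eqP; rewrite (eq_prim_root_expr hw) -/N.
  move/eqP/(congr1 (modn^~ m)); rewrite /= !modn_dvdm // -addn1 mulnC modnMDl.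
  by move/eqP; rewrite eqn_mod_dvd // expn_gt0 prime_gt0.
have s0 : 0 < s by move: d0; rewrite hd muln_gt0 => /andP[].
have ps0 : 0 < p ^ s - 1.
  by rewrite subn_gt0 -{1}(expn0 p) ltn_exp2l ?prime_gt1.
set j := (p ^ s - 1) %/ m.
have hjm : (j * m)%N = p ^ s - 1 by rewrite /j divnK.
have j0 : 0 < j by move: ps0; rewrite -hjm muln_gt0 => /andP[].
have hmj : (p ^ s - 1) %/ j = m by rewrite -hjm mulKn.
split; first by rewrite hd -(prednK k0) expnS -mulnA dvdn_mulr.
exists k, s, j; rewrite KGE.
have KE : KG p w s j = <<[set omhat w ^+ m; frobp F p ^+ s]>>%G.
  by apply/val_inj; rewrite /= hmj.
have sKH : KG p w s j \subset H.
  rewrite KE gen_subG; apply/subsetP => g; rewrite !inE => /orP[]/eqP-> //.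
  by apply: (subsetP sCH); rewrite CE cycle_id.
have sCK : C \subset KG p w s j by rewrite CE KE cycle_subG mem_gen // !inE eqxx.
split=> //; first by rewrite -hjm dvdn_mulr.
  by rewrite /normal sKH (normal_over hp hF hw).
rewrite coprime_sym prime_coprime //; apply/negP => pdiv.
have pkK : (p ^ k)%N %| #|KG p w s j|.
  by rewrite -oP; apply: cardSg; rewrite PE cycle_subG KE mem_gen // !inE eqxx orbT.
have := dvdn_mul pkK pdiv; rewrite Lagrange // -expnSr pfactor_dvdn ?cardG_gt0 //.
by rewrite ltnn.
Qed.

Local Close Scope group_scope.
Unset Implicit Arguments.

Theorem lemma2p7 (F : finFieldType) (p d : nat) (w : F)
  (hp : prime p) (hF : #|F| = (p ^ d)%N)
  (hw : ((p ^ d).-1.-primitive_root w)%R) :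
  (* forward direction *)
  (forall H : {group {perm F}},
     H \subset GammaL1 p w -> p_exceptional p H ->
     p %| d /\
     exists k s j : nat,
       [/\ d = (p ^ k * s)%N, 0 < k, j %| p ^ s - 1,
           (Kgrp p w s j <| H)%g & coprime #|H : Kgrp p w s j|%g p])
  /\
  (* converse *)
  (forall k s j : nat,
     d = (p ^ k * s)%N -> 0 < k -> j %| p ^ s - 1 ->
     [/\ p_exceptional p (Kgrp p w s j) /\ half_transitive (Kgrp p w s j),
         #|orbits_sharp (Kgrp p w s j)| = ((p ^ s - 1) %/ j)%N,
         (forall x : F, x \in Vsharp F ->
            #|orbit 'P (Kgrp p w s j) x| = (j * (p ^ d - 1) %/ (p ^ s - 1))%N),
         (forall L : {group {perm F}},
            L \subset GammaL1 p w ->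
            Kgrp p w s j \subset L ->
            coprime #|L : Kgrp p w s j|%g p ->
            (L :&: <[omhat w]>%g = Kgrp p w s j :&: <[omhat w]>%g) ->
            p_exceptional p L)
       & <<[set (omhat w ^+ (p ^ (d %/ p) - 1))%g; (frobp F p ^+ (d %/ p))%g]>>%g
           \subset Kgrp p w s j
         /\ p_exceptional p
              <<[set (omhat w ^+ (p ^ (d %/ p) - 1))%g; (frobp F p ^+ (d %/ p))%g]>>%g]).
Proof.
split; first by move=> H; apply: (forward hp hF hw).
move=> k s j hd hk hj.
have [hc w0 N0 d0 hx] := basics hp hF hw.
have [s0 m0 hm mN sd] := conv_arith hp d0 hd hk hj.
have j0 : 0 < j.
  have : 0 < p ^ s - 1 by rewrite subn_gt0 -{1}(expn0 p) ltn_exp2l ?prime_gt1.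
  by rewrite -hm muln_gt0 => /andP[].
have excK : p_exceptional p (Kgrp p w s j).
  rewrite KGE; apply: (conv_exc hp hF hw hd hk hj (K_sub p w s j) (subxx _)).
  by rewrite KGE indexgg coprime1n.
have dE : d = (p ^ 1 * (d %/ p))%N.
  by rewrite expn1 mulnC divnK // hd -(prednK hk) expnS -mulnA dvdn_mulr.
have E : <<[set (omhat w ^+ (p ^ (d %/ p) - 1))%g; (frobp F p ^+ (d %/ p))%g]>>%g
   = Kgrp p w (d %/ p) 1 by rewrite /Kgrp divn1.
split.
- split=> // x y; rewrite !inE => x0 y0.
  by rewrite (K_orbit hp hF hw hd hk hj x0) (K_orbit hp hF hw hd hk hj y0).
- exact: (K_count hp hF hw hd hk hj).
- move=> x; rewrite inE => x0; rewrite (K_orbit hp hF hw hd hk hj x0).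
  set m := (p ^ s - 1) %/ j in hm *.
  by rewrite [(p ^ d - 1)]subn1 -hm (mulnC m j) divnMl.
- by move=> L sLG sKL cop _; apply: (conv_exc hp hF hw hd hk hj).
split; last first.
  rewrite E KGE; apply: (conv_exc hp hF hw dE (ltnSn 0) (dvd1n _) (K_sub _ _ _ _) (subxx _)).
  by rewrite KGE indexgg coprime1n.
rewrite E gen_subG; apply/subsetP => g; rewrite !inE divn1 => /orP[]/eqP->.
  have sdp : s %| d %/ p.
    by rewrite hd -(prednK hk) expnS -mulnA mulKn ?prime_gt0 // dvdn_mull.
  set m := (p ^ s - 1) %/ j in hm *.
  have := dvd_expsub1 (prime_gt0 hp) sdp; rewrite -hm => /(dvdn_trans (dvdn_mulr j (dvdnn _))).
  move=> /dvdnP[t ->]; rewrite mulnC expgM groupX //.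
  by rewrite mem_gen // !inE eqxx.
have -> : (d %/ p = s * p ^ k.-1)%N.
  by rewrite hd -(prednK hk) expnS -mulnA mulKn ?prime_gt0 // mulnC.
by rewrite expgM groupX // mem_gen // !inE eqxx orbT.
Qed.
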